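(* Let $m$ be an even positive integer and let $a\ge 1$. Let $\mathcal{H}_\infty$ be the $m$-order infinite dimensional generalized Hilbert tensor and, for a positive integer $n$, $\mathcal{H}_n$ the $m$-order $n$-dimensional generalized Hilbert tensor, with entries $$\mathcal{H}_{i_1 i_2\cdots i_m}=\frac{1}{i_1+i_2+\cdots+i_m-m+a}$$ (with $i_1,\dots,i_m$ ranging over all positive integers for $\mathcal{H}_\infty$, and over $\{1,\dots,n\}$ for $\mathcal{H}_n$). Then both are positive definite, i.e. $$\mathcal{H}_\infty x^m=\sum_{i_1,\dots,i_m=1}^\infty \frac{x_{i_1}\cdots x_{i_m}}{i_1+\cdots+i_m-m+a}>0\quad\text{for all nonzero } x\in l^1,$$ $$\mathcal{H}_n x^m=\sum_{i_1,\dots,i_m=1}^n \frac{x_{i_1}\cdots x_{i_m}}{i_1+\cdots+i_m-m+a}>0\quad\text{for all nonzero } x\in\mathbb{R}^n.$$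
   Context: $l^1$ denotes the space of real sequences $x=(x_i)_{i=1}^\infty$ with $\sum_{i=1}^\infty |x_i|<\infty$; the series defining $\mathcal{H}_\infty x^m$ converges absolutely for $x\in l^1$. *)

(* Defs.v *)
From HB Require Import structures.
From mathcomp Require Import all_boot all_order all_algebra.
From mathcomp Require Import all_classical all_reals all_analysis.
Set Implicit Arguments. Unset Strict Implicit. Unset Printing Implicit Defensive.
Import Order.TTheory GRing.Theory Num.Theory numFieldNormedType.Exports.
Local Open Scope ring_scope.

(* Indices are 0-based: index i : 'I_n stands for the positive integer i+1.
   Hence the entry 1/(i_1+...+i_m - m + a) (1-based) becomes
   1/((i_1+...+i_m) + a) with 0-based indices. *)

Definition gen_hilbert_form (R : realType) (m n : nat) (a : R)
    (x : 'I_n -> R) : R :=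
  \sum_(t : {ffun 'I_m -> 'I_n})
     (\prod_(k < m) x (t k)) / ((\sum_(k < m) (t k : nat))%:R + a).

Definition in_l1 (R : realType) (x : nat -> R) : Prop :=
  cvgn [sequence \sum_(0 <= i < N) `|x i|]_N.

(* Main.v *)
Require Import Defs.
From HB Require Import structures.
From mathcomp Require Import all_boot all_order all_algebra.
From mathcomp Require Import all_classical all_reals all_analysis.
From mathcomp Require Import ring lra.
Import Order.TTheory GRing.Theory Num.Theory numFieldNormedType.Exports.
Local Open Scope ring_scope.
Set Implicit Arguments. Unset Strict Implicit.


Lemma bern (R : realType) (t c : R) : 0 <= t -> 1 <= c -> 1 + c * (t - 1) <= t `^ c.
Proof.
move=> t0 c1.
have [->|c1'] := eqVneq c 1.
  by rewrite powRr1 // mul1r addrC subrK.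
have c1s : 1 < c by rewrite lt_neqAle eq_sym c1' c1.
have c0 : 0 < c by apply: lt_trans c1s.
have q0 : 0 < c / (c - 1) by rewrite divr_gt0 // subr_gt0.
have := @conjugate_powR R t 1 c (c / (c - 1)) t0 ler01 c0 q0.
rewrite powR1 mulr1 invf_div.
have -> : c^-1 + (c - 1) / c = 1.
  by field; rewrite gt_eqF.
move=> /(_ erefl) H.
have : c * t <= t `^ c + (c - 1).
  have := ler_wpM2l (ltW c0) H.
  rewrite mulrDr mulrCA divff ?gt_eqF // mulr1 mul1r.
  by rewrite [c * ((c-1)/c)]mulrC divfK ?gt_eqF.
lra.
Qed.



Lemma pow_up (R : realType) (u v c : R) : 0 <= u -> u <= v -> 1 <= c ->
  v `^ c - u `^ c <= c * v `^ (c - 1) * (v - u).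
Proof.
move=> u0 uv c1.
have c0 : 0 < c by lra.
have [v0|vpos] := eqVneq v 0.
  have u00 : u = 0 by apply/le_anti; rewrite u0 -v0 uv.
  by rewrite v0 u00 !subrr mulr0.
have vp : 0 < v by rewrite lt_neqAle eq_sym vpos (le_trans u0 uv).
set t := u / v.
have t0 : 0 <= t by rewrite divr_ge0 // ltW.
have ut : u = v * t by rewrite /t mulrC divfK.
have := @bern R t c t0 c1.
have hv : v `^ c = v * v `^ (c - 1) by rewrite mulr_powRB1 // ltW.
rewrite ut powRM ?(ltW vp) // hv => H.
have vc0 : 0 <= v * v `^ (c - 1) by rewrite mulr_ge0 ?powR_ge0 ?ltW.
have := ler_wpM2l vc0 H.
nra.
Qed.

Lemma pow_lo (R : realType) (u v c : R) : 0 <= u -> u <= v -> 1 <= c ->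
  c * u `^ (c - 1) * (v - u) <= v `^ c - u `^ c.
Proof.
move=> u0 uv c1.
have c0 : 0 < c by lra.
have [u00|upos] := eqVneq u 0.
  have hc : 0 `^ c = 0 :> R by rewrite powR0 // gt_eqF.
  rewrite u00 hc !subr0.
  have [c11|c11] := eqVneq (c - 1) 0.
    rewrite c11 powRr0 mulr1.
    have -> : c = 1 by lra.
    by rewrite powRr1 ?mul1r // (le_trans u0 uv).
  by rewrite powR0 // mulr0 mul0r powR_ge0.
have up : 0 < u by rewrite lt_neqAle eq_sym upos u0.
set t := v / u.
have t0 : 0 <= t by rewrite divr_ge0 // ?(ltW up) // (le_trans u0 uv).
have ut : v = u * t by rewrite /t mulrC divfK.
have := @bern R t c t0 c1.
have hu : u `^ c = u * u `^ (c - 1) by rewrite mulr_powRB1 // ltW.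
rewrite ut powRM ?(ltW up) // hu => H.
have uc0 : 0 <= u * u `^ (c - 1) by rewrite mulr_ge0 ?powR_ge0 ?ltW.
have := ler_wpM2l uc0 H.
nra.
Qed.



Definition Ug (R : realType) (K : nat) (c : R) : R :=
  K%:R^-1 * \sum_(j < K) ((j.+1)%:R / K%:R) `^ (c - 1).

Lemma tele (R : realType) (K : nat) (f : nat -> R) :
  \sum_(j < K) (f j.+1 - f j) = f K - f 0%N.
Proof. by rewrite -(big_mkord xpredT (fun j => f j.+1 - f j)) telescope_sumr. Qed.

Lemma riemann (R : realType) (K : nat) (c : R) : (0 < K)%N -> 1 <= c ->
  `|Ug K c - c^-1| <= K%:R^-1.
Proof.
move=> K0 c1.
have c0 : 0 < c by lra.
have Kp : 0 < K%:R :> R by rewrite ltr0n.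
set s := fun j : nat => j%:R / K%:R : R.
have s0 : s 0%N = 0 by rewrite /s mul0r.
have sK : s K = 1 by rewrite /s divff // gt_eqF.
have sge0 j : 0 <= s j by rewrite /s divr_ge0 // ltW.
have sd j : s j.+1 - s j = K%:R^-1 by rewrite /s -mulrBl -natr1 addrAC subrr add0r mul1r.
have sle j : s j <= s j.+1 by rewrite -subr_ge0 sd invr_ge0 ltW.
have tel1 : \sum_(j < K) (s j.+1 `^ c - s j `^ c) = 1.
  rewrite (@tele R K (fun j => s j `^ c)) /= sK s0 powR1 powR0 ?subr0 //; lra.
have tel2 : \sum_(j < K) (s j.+1 `^ (c - 1) - s j `^ (c - 1)) <= 1.
  rewrite (@tele R K (fun j => s j `^ (c - 1))) /= sK s0 powR1.
  by rewrite lerBlDr lerDl powR_ge0.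
have up : 1 <= c * Ug K c.
  rewrite -tel1 /Ug mulrA (mulrC c) -mulrA mulr_sumr mulr_sumr.
  apply: ler_sum => j _.
  rewrite (le_trans (pow_up (sge0 j) (sle j) c1)) //.
  by rewrite sd mulrC.
have lo : \sum_(j < K) c * s j `^ (c - 1) * K%:R^-1 <= 1.
  rewrite -[X in _ <= X]tel1; apply: ler_sum => j _.
  by have := pow_lo (sge0 j) (sle j) c1; rewrite sd.
have key : \sum_(j < K) s j.+1 `^ (c - 1) <= K%:R / c + 1.
  have e : \sum_(j < K) s j.+1 `^ (c - 1) =
      \sum_(j < K) s j `^ (c - 1) + \sum_(j < K) (s j.+1 `^ (c - 1) - s j `^ (c - 1)).
    by rewrite -big_split /=; apply: eq_bigr => j _; ring.
  rewrite e lerD //.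
  set S := \sum_(j < K) s j `^ (c - 1).
  have eS : \sum_(j < K) c * s j `^ (c - 1) * K%:R^-1 = c * K%:R^-1 * S.
    by rewrite /S mulr_sumr; apply: eq_bigr => j _; ring.
  rewrite eS in lo.
  have -> : S = K%:R / c * (c * K%:R^-1 * S) by field; rewrite !gt_eqF.
  rewrite -[X in _ <= X]mulr1 ler_wpM2l // divr_ge0 // ltW //.
have Ueq : Ug K c = K%:R^-1 * \sum_(j < K) s j.+1 `^ (c - 1) by [].
have U1 : c^-1 <= Ug K c.
  rewrite -[Ug K c]mul1r -(mulVf (lt0r_neq0 c0)) -mulrA.
  by rewrite -[X in X <= _]mulr1 ler_wpM2l // invr_ge0 ltW.
have U2 : Ug K c <= c^-1 + K%:R^-1.
  rewrite Ueq.
  have Ki : 0 <= K%:R^-1 :> R by rewrite invr_ge0 ltW.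
  have := ler_wpM2l Ki key.
  have -> : K%:R^-1 * (K%:R / c + 1) = c^-1 + K%:R^-1 :> R by field; rewrite !gt_eqF.
  by [].
rewrite ler_norml; apply/andP; split; lra.
Qed.



Definition pf (R : realType) (N : nat) (y : 'I_N -> R) (s : R) : R :=
  \sum_(i < N) y i * s ^+ i.

Definition Gf (R : realType) (m N : nat) (a : R) (y : 'I_N -> R) (K : nat) : R :=
  K%:R^-1 * \sum_(j < K) ((j.+1)%:R / K%:R) `^ (a - 1) * (pf y ((j.+1)%:R / K%:R)) ^+ m.

Lemma sum_pow (R : realType) (m N : nat) (f : 'I_N -> R) :
  (\sum_(i < N) f i) ^+ m = \sum_(t : {ffun 'I_m -> 'I_N}) \prod_(k < m) f (t k).
Proof.
have <- : \prod_(k < m) (\sum_(i < N) f i) = (\sum_(i < N) f i) ^+ m.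
  by rewrite prodr_const card_ord.
by rewrite bigA_distr_bigA.
Qed.

Lemma gh_expand (R : realType) (m N : nat) (a : R) (y : 'I_N -> R) (K : nat) :
  (0 < K)%N ->
  Gf m a y K = \sum_(t : {ffun 'I_m -> 'I_N})
     (\prod_(k < m) y (t k)) * Ug K ((\sum_(k < m) (t k : nat))%:R + a).
Proof.
move=> K0.
rewrite /Gf /Ug.
have -> : \sum_(t : {ffun 'I_m -> 'I_N}) (\prod_(k < m) y (t k)) *
    (K%:R^-1 * \sum_(j < K) ((j.+1)%:R / K%:R) `^ ((\sum_(k < m) (t k : nat))%:R + a - 1))
  = K%:R^-1 * \sum_(j < K) \sum_(t : {ffun 'I_m -> 'I_N}) (\prod_(k < m) y (t k)) *
        ((j.+1)%:R / K%:R) `^ ((\sum_(k < m) (t k : nat))%:R + a - 1).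
  rewrite exchange_big mulr_sumr; apply: eq_bigr => t _.
  by rewrite mulrCA mulr_sumr.
congr (_ * _); apply: eq_bigr => j _.
set s := (j.+1)%:R / K%:R.
have s0 : 0 < s by rewrite divr_gt0 // ltr0n.
rewrite /pf sum_pow mulr_sumr; apply: eq_bigr => t _.
rewrite big_split /= prodrXr -addrA [in RHS]powRD; last by rewrite implybE (gt_eqF s0) orbT.
rewrite powR_mulrn ?ltW //; ring.
Qed.

Lemma gh_approx (R : realType) (m N : nat) (a : R) (y : 'I_N -> R) (K : nat) :
  1 <= a -> (0 < K)%N ->
  `|gen_hilbert_form m a y - Gf m a y K| <= (\sum_(i < N) `|y i|) ^+ m / K%:R.
Proof.
move=> a1 K0.
rewrite gh_expand // /gen_hilbert_form -sumrB.
rewrite (le_trans (ler_norm_sum _ _ _)) //.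
rewrite sum_pow mulr_suml; apply: ler_sum => t _.
rewrite -mulrBr normrM normr_prod ler_wpM2l ?prodr_ge0 //.
rewrite distrC; apply: riemann => //.
have : 0 <= ((\sum_(k < m) (t k : nat))%:R : R) by rewrite ler0n.
lra.
Qed.



Lemma even_norm (R : realType) (m : nat) (x : R) : ~~ odd m -> x ^+ m = `|x| ^+ m.
Proof.
move=> hm.
by rewrite -(odd_double_half m) (negbTE hm) add0n -mul2n !exprM real_normK ?num_real.
Qed.

Lemma pf_lower (R : realType) (N : nat) (y : 'I_N -> R) (i0 : 'I_N) (B s : R) :
  (forall i : 'I_N, (i < i0)%N -> y i = 0) -> \sum_(i < N) `|y i| <= B ->
  0 <= s -> s <= 1 ->
  `|y i0| * s ^+ i0 - B * s ^+ i0.+1 <= `|pf y s|.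
Proof.
move=> hz hB s0 s1.
rewrite /pf (bigD1 i0) //=.
set r := \sum_(i < N | i != i0) y i * s ^+ i.
have hr : `|r| <= s ^+ i0.+1 * B.
  rewrite (le_trans (ler_norm_sum _ _ _)) //.
  apply: (@le_trans _ _ (\sum_(i < N | i != i0) `|y i| * s ^+ i0.+1)).
    apply: ler_sum => i hi.
    rewrite normrM normrX (ger0_norm s0).
    have [lt|ge] := ltnP i i0.
      by rewrite hz // normr0 !mul0r.
    rewrite ler_wpM2l // ler_wiXn2l //.
    by rewrite ltn_neqAle ge andbT eq_sym.
  rewrite -mulr_suml mulrC ler_wpM2l ?exprn_ge0 //.
  apply: le_trans hB.
  rewrite [X in _ <= X](bigD1 i0) //= lerDr //.
have := ler_normD (y i0 * s ^+ i0 + r) (- r).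
rewrite addrK normrN normrM normrX (ger0_norm s0).
lra.
Qed.

Lemma lowerG (R : realType) (m : nat) (a : R) (i0 : nat) (x0 B : R) :
  ~~ odd m -> 1 <= a -> x0 != 0 -> 0 < B ->
  exists2 c0 : R, 0 < c0 & forall N (y : 'I_N -> R) (j0 : 'I_N),
    j0 = i0 :> nat -> y j0 = x0 -> (forall i : 'I_N, (i < j0)%N -> y i = 0) ->
    \sum_(i < N) `|y i| <= B -> c0 <= gen_hilbert_form m a y.
Proof.
move=> hm a1 x00 B0.
have ax0 : 0 < `|x0| by rewrite normr_gt0.
set d := `|x0| / (2 * B).
have d0 : 0 < d by rewrite divr_gt0 // mulr_gt0.
set M := (Num.Def.archi_bound d^-1).+1.
have hM : d^-1 < M%:R.
  apply: (lt_le_trans (archi_boundP _)); first by rewrite invr_ge0 ltW.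
  by rewrite ler_nat.
set MM : R := M%:R.
have MM1 : 1 <= MM by rewrite /MM ler1n.
have MM0 : 0 < MM by lra.
set lo := (2 * MM)^-1.
set hi := MM^-1.
have lo0 : 0 < lo by rewrite invr_gt0 mulr_gt0.
have hi1 : hi <= 1 by rewrite /hi invr_le1 // ?unitf_gt0.
have hid : hi < d.
  by rewrite /hi -(invrK d) ltf_pV2 ?posrE // invr_gt0.
set kap := lo `^ (a - 1) * (lo ^+ i0 * `|x0| / 2) ^+ m.
have kap0 : 0 < kap.
  rewrite mulr_gt0 ?powR_gt0 // exprn_gt0 // mulr_gt0 // mulr_gt0 // exprn_gt0 //.
set L := (Num.Def.archi_bound (2 * B ^+ m / kap)).+1.
have hL : 2 * B ^+ m / kap < L%:R.
  apply: (lt_le_trans (archi_boundP _)).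
    by rewrite divr_ge0 ?(ltW kap0) // mulr_ge0 // exprn_ge0 // ltW.
  by rewrite ler_nat.
set LL : R := L%:R.
have LL0 : 0 < LL by rewrite /LL ltr0n.
set K := (2 * M * L)%N.
have K0 : (0 < K)%N by rewrite /K !muln_gt0.
have KK : K%:R = 2 * MM * LL :> R by rewrite /K !natrM.
exists (kap / (4 * MM)); first by rewrite divr_gt0 // mulr_gt0.
move=> N y j0 ej0 yj0 hz hB.
have Bm0 : 0 <= B ^+ m by rewrite exprn_ge0 // ltW.
have Kp : 0 < K%:R :> R by rewrite ltr0n.
have hSB : (\sum_(i < N) `|y i|) ^+ m <= B ^+ m.
  by rewrite lerXn2r // nnegrE ?sumr_ge0 // ltW.
have hap := @gh_approx R m N a y K a1 K0.
have hF : Gf m a y K - B ^+ m / K%:R <= gen_hilbert_form m a y.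
  move: hap; rewrite distrC ler_norml => /andP[_ h2].
  have : (\sum_(i < N) `|y i|) ^+ m / K%:R <= B ^+ m / K%:R.
    by rewrite ler_pM2r // invr_gt0.
  lra.
set T := fun j : nat => ((j.+1)%:R / K%:R) `^ (a - 1) * pf y ((j.+1)%:R / K%:R) ^+ m.
have T0 j : 0 <= T j.
  by rewrite /T mulr_ge0 ?powR_ge0 // exprn_even_ge0.
have Tk j : (L <= j < 2 * L)%N -> kap <= T j.
  move=> /andP[jL jL2].
  have J1 : LL <= (j.+1)%:R by rewrite /LL ler_nat; apply: leqW.
  have J2 : (j.+1)%:R <= 2 * LL by rewrite /LL -natrM ler_nat.
  pose s := (j.+1)%:R / K%:R : R.
  have s0 : 0 <= s by rewrite /s divr_ge0 // ltW.
  have los : lo <= s.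
    have -> : lo = LL / K%:R by rewrite KK /lo; field; rewrite ?mulf_neq0 ?lt0r_neq0.
    by rewrite /s ler_pM2r // invr_gt0.
  have shi : s <= hi.
    have -> : hi = (2 * LL) / K%:R by rewrite KK /hi; field; rewrite ?mulf_neq0 ?lt0r_neq0.
    by rewrite /s ler_pM2r // invr_gt0.
  have s1 : s <= 1 by apply: le_trans hi1.
  have Bs : B * s <= `|x0| / 2.
    have -> : `|x0| / 2 = B * d by rewrite /d; field; rewrite ?mulf_neq0 ?lt0r_neq0.
    by rewrite ler_pM2l //; apply: ltW; apply: le_lt_trans shi hid.
  have hp := pf_lower hz hB s0 s1.
  rewrite yj0 ej0 exprS in hp.
  have si0 : 0 <= s ^+ i0 by rewrite exprn_ge0.
  have hp2 : s ^+ i0 * `|x0| / 2 <= `|pf y s|.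
    nra.
  rewrite /T -/s /kap.
  apply: ler_pM.
  - by rewrite powR_ge0.
  - by rewrite exprn_ge0 // divr_ge0 // mulr_ge0 // exprn_ge0 // ltW.
  - apply: ge0_ler_powR; [lra | by rewrite nnegrE ltW | by rewrite nnegrE | exact: los].
  rewrite [in X in _ <= X](@even_norm R m (pf y s) hm) lerXn2r // ?nnegrE ?normr_ge0 //.
    by rewrite divr_ge0 // mulr_ge0 // exprn_ge0 // ltW.
  apply: le_trans hp2.
  rewrite ler_pM2r ?invr_gt0 // ler_pM2r //.
  by rewrite lerXn2r // nnegrE ?ltW.
have hsum : kap * LL <= \sum_(j < K) T j.
  have hLK : (L <= K)%N by rewrite /K leq_pmull // muln_gt0.
  have h2LK : (2 * L <= K)%N by rewrite /K leq_mul2r leq_pmulr ?orbT.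
  have hL2 : (L <= 2 * L)%N by rewrite leq_pmull.
  rewrite -(big_mkord xpredT T) (@big_cat_nat _ _ _ L 0 K) //=.
  rewrite (@big_cat_nat _ _ _ (2 * L) L K) //=.
  rewrite -[X in X <= _]add0r lerD ?sumr_ge0 //.
  rewrite -[X in X <= _]addr0 lerD ?sumr_ge0 //.
  apply: (@le_trans _ _ (\sum_(L <= j < 2 * L) kap)).
    by rewrite sumr_const_nat mul2n -addnn addnK -mulr_natr.
  by apply: ler_sum_nat.
have hG : kap * LL / K%:R <= Gf m a y K.
  by rewrite /Gf mulrC ler_pM2l ?invr_gt0.
apply: le_trans hF.
have e1 : kap * LL / K%:R - B ^+ m / K%:R - kap / (4 * MM)
    = (kap * LL - 2 * B ^+ m) / (4 * MM * LL).
  by rewrite KK; field; rewrite ?mulf_neq0 ?lt0r_neq0.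
have h3 : 0 <= (kap * LL - 2 * B ^+ m) / (4 * MM * LL).
  rewrite divr_ge0 ?mulr_ge0 ?(ltW MM0) ?(ltW LL0) //.
  move: hL; rewrite ltr_pdivrMr // => hL; nra.
have : kap * LL / K%:R - B ^+ m / K%:R <= Gf m a y K - B ^+ m / K%:R by rewrite lerD2r.
lra.
Qed.



Lemma powdiff (R : realType) (m : nat) (u v B : R) : `|u| <= B -> `|v| <= B ->
  `|u ^+ m - v ^+ m| <= m%:R * B ^+ m.-1 * `|u - v|.
Proof.
move=> hu hv.
have B0 : 0 <= B by apply: le_trans hu.
rewrite subrXX normrM mulrC ler_wpM2r //.
rewrite (le_trans (ler_norm_sum _ _ _)) //.
apply: (@le_trans _ _ (\sum_(i < m) B ^+ m.-1)); last first.
  by rewrite sumr_const card_ord mulr_natl.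
apply: ler_sum => i _.
rewrite normrM !normrX.
have -> : B ^+ m.-1 = B ^+ (m.-1 - i) * B ^+ i.
  rewrite -exprD subnK //.
  by rewrite -ltnS (ltn_predK (ltn_ord i)).
by apply: ler_pM; rewrite ?exprn_ge0 ?normr_ge0 // lerXn2r // nnegrE normr_ge0.
Qed.

Definition yN (R : realType) (x : nat -> R) (N : nat) : 'I_N -> R := fun i => x i.
Arguments yN {R} x N.

Lemma pf_nat (R : realType) (x : nat -> R) (N : nat) (s : R) :
  pf (yN x N) s = \sum_(0 <= i < N) x i * s ^+ i.
Proof. by rewrite /pf big_mkord. Qed.

Lemma pf_bound (R : realType) (x : nat -> R) (N : nat) (B s : R) :
  \sum_(i < N) `|x i| <= B -> 0 <= s -> s <= 1 -> `|pf (yN x N) s| <= B.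
Proof.
move=> hB s0 s1.
rewrite /pf (le_trans (ler_norm_sum _ _ _)) //; apply: le_trans hB.
apply: ler_sum => i _.
rewrite normrM normrX (ger0_norm s0) -[X in _ <= X]mulr1 ler_wpM2l //.
by rewrite exprn_ile1.
Qed.

Lemma pf_diff (R : realType) (x : nat -> R) (N M : nat) (s : R) : (N <= M)%N ->
  0 <= s -> s <= 1 -> `|pf (yN x N) s - pf (yN x M) s| <= \sum_(N <= i < M) `|x i|.
Proof.
move=> NM s0 s1.
rewrite !pf_nat (@big_cat_nat _ _ _ N 0 M) //= opprD addrA subrr add0r normrN.
rewrite (le_trans (ler_norm_sum _ _ _)) //.
apply: ler_sum => i _.
rewrite normrM normrX (ger0_norm s0) -[X in _ <= X]mulr1 ler_wpM2l //.
by rewrite exprn_ile1.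
Qed.

Lemma lim_le (R : realType) (X Y C : R) : 0 <= C ->
  (forall K : nat, (0 < K)%N -> X <= Y + C / K%:R) -> X <= Y.
Proof.
move=> C0 h.
apply/ler_addgt0Pr => e e0.
have hh := @archi_boundP R (C / e).
set K := (Num.Def.archi_bound (C / e)).+1.
have Kp : 0 < K%:R :> R by rewrite ltr0n.
have hK : C / e < K%:R.
  apply: (lt_le_trans (hh _)); first by rewrite divr_ge0 // ltW.
  by rewrite ler_nat /K.
have hK' : C / K%:R <= e.
  rewrite ler_pdivrMr // mulrC -ler_pdivrMr //; exact: ltW.
apply: le_trans (h K erefl) _.
by rewrite lerD2l.
Qed.

Lemma cauchyF (R : realType) (m : nat) (a : R) (x : nat -> R) (B : R) (N M : nat) :
  1 <= a -> (forall n, \sum_(i < n) `|x i| <= B) -> (N <= M)%N ->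
  `|gen_hilbert_form m a (yN x N) - gen_hilbert_form m a (yN x M)|
    <= m%:R * B ^+ m.-1 * \sum_(N <= i < M) `|x i|.
Proof.
move=> a1 hB NM.
have B0 : 0 <= B by apply: le_trans (hB 0%N); rewrite big_ord0.
have Bm0 : 0 <= B ^+ m by rewrite exprn_ge0.
apply: (@lim_le R _ _ (2 * B ^+ m)); first by rewrite mulr_ge0.
move=> K K0.
have Kp : 0 < K%:R :> R by rewrite ltr0n.
have hA n : `|gen_hilbert_form m a (yN x n) - Gf m a (yN x n) K| <= B ^+ m / K%:R.
  apply: le_trans (@gh_approx R m n a (yN x n) K a1 K0) _.
  rewrite ler_pM2r ?invr_gt0 // lerXn2r // nnegrE ?sumr_ge0 //.
have hG : `|Gf m a (yN x N) K - Gf m a (yN x M) K|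
    <= m%:R * B ^+ m.-1 * \sum_(N <= i < M) `|x i|.
  rewrite /Gf -mulrBr -sumrB normrM gtr0_norm ?invr_gt0 //.
  set C := m%:R * B ^+ m.-1 * \sum_(N <= i < M) `|x i|.
  apply: (@le_trans _ _ (K%:R^-1 * \sum_(i < K) C)); last first.
    by rewrite sumr_const card_ord -[C *+ K]mulr_natl mulKf ?lt0r_neq0.
  apply: ler_wpM2l; first by rewrite invr_ge0 ltW.
  apply: le_trans (ler_norm_sum _ _ _) _; apply: ler_sum => j _.
  pose s := (j.+1)%:R / K%:R : R.
  have s0 : 0 <= s by rewrite /s divr_ge0 // ltW.
  have s1 : s <= 1 by rewrite /s ler_pdivrMr // mul1r ler_nat.
  rewrite -/s -mulrBr normrM.
  have w1 : `|s `^ (a - 1)| <= 1.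
    rewrite ger0_norm ?powR_ge0 //.
    have a10 : 0 <= a - 1 by lra.
    have h := @ge0_ler_powR R (a - 1) a10 s 1.
    rewrite !nnegrE ler01 in h.
    by have := h s0 erefl s1; rewrite powR1.
  have hd := powdiff m (pf_bound (hB N) s0 s1) (pf_bound (hB M) s0 s1).
  have hpd := pf_diff x NM s0 s1.
  have C0 : 0 <= C by rewrite /C !mulr_ge0 ?exprn_ge0 ?sumr_ge0.
  rewrite -[C]mul1r; apply: ler_pM => //.
  apply: le_trans hd _.
  by rewrite /C ler_wpM2l // mulr_ge0 // exprn_ge0.
set FN := gen_hilbert_form m a (yN x N).
set FM := gen_hilbert_form m a (yN x M).
set GN := Gf m a (yN x N) K.
set GM := Gf m a (yN x M) K.
have e1 : FN - FM = (FN - GN) + (GN - GM) - (FM - GM) by ring.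
rewrite e1.
have := ler_normB (FN - GN + (GN - GM)) (FM - GM).
have := ler_normD (FN - GN) (GN - GM).
have := hA N; have := hA M.
rewrite -/FN -/FM -/GN -/GM.
have -> : 2 * B ^+ m / K%:R = B ^+ m / K%:R + B ^+ m / K%:R by ring.
lra.
Qed.


Unset Implicit Arguments. Set Strict Implicit.
Local Open Scope classical_set_scope.

Theorem theorem3p1 (R : realType) (m : nat) (a : R) :
  (0 < m)%N -> ~~ odd m -> 1 <= a ->
  (forall x : nat -> R, in_l1 x -> (exists i, x i != 0) ->
     exists L : R,
       (gen_hilbert_form m a (fun i : 'I_N => x (nat_of_ord i))
          @[N --> \oo] --> L) /\ 0 < L)
  /\
  (forall (n : nat) (x : 'I_n -> R), (0 < n)%N -> (exists i, x i != 0) ->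
     0 < gen_hilbert_form m a x).
Proof.
move=> m0 hm a1; split.
  move=> x hl [i1 hi1].
  pose S := fun N => \sum_(0 <= i < N) `|x i|.
  have hl2 : S @ \oo --> limn S := hl.
  have Sinc : nondecreasing_seq S.
    move=> p q pq; rewrite /S (@big_cat_nat _ _ _ p 0 q) //= lerDl sumr_ge0 //.
  set B := limn S.
  have SB n : S n <= B := nondecreasing_cvgn_le Sinc hl n.
  have hB n : \sum_(i < n) `|x i| <= B by have := SB n; rewrite /S big_mkord.
  have ex : exists i, x i != 0 by exists i1.
  case: (ex_minnP ex) => i0 hi0 hmin.
  have B0 : 0 < B.
    apply: lt_le_trans (SB i0.+1); rewrite /S big_nat_recr //=.
    by rewrite ltr_pwDr ?normr_gt0 // sumr_ge0.
  have [c0 c00 hc] := lowerG i0 hm a1 hi0 B0.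
  pose Fn := fun N => gen_hilbert_form m a (yN x N).
  have low N : (i0 < N)%N -> c0 <= Fn N.
    move=> hN; apply: (hc N (yN x N) (Ordinal hN)) => //.
    move=> i hi; apply/eqP; apply: contraTT hi => hxi.
    by rewrite -leqNgt; apply: hmin.
  have cv : cvg (Fn @ \oo).
    apply/cauchy_cvgP; apply: cauchy_exP => eps eps0.
    set C := m%:R * B ^+ m.-1 + 1.
    have C0 : 0 < C by rewrite /C ltr_wpDl // mulr_ge0 // exprn_ge0 // ltW.
    have [N0 _ hN0] := (cvgrPdist_lt _ _).1 hl2 (eps / C) (divr_gt0 eps0 C0).
    exists (Fn N0); exists N0 => // n /= hn.
    rewrite -ball_normE /ball_ /=.
    have h1 := @cauchyF R m a x B N0 n a1 hB hn.
    have hT : \sum_(N0 <= i < n) `|x i| = S n - S N0.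
      by rewrite /S (@big_cat_nat _ _ _ N0 0 n) //= addrC addrK.
    have hT0 : 0 <= \sum_(N0 <= i < n) `|x i| by rewrite sumr_ge0.
    have hT1 : \sum_(N0 <= i < n) `|x i| < eps / C.
      rewrite hT; apply: le_lt_trans (hN0 N0 (leqnn _)).
      apply: le_trans (ler_norm _); rewrite lerD2r; exact: SB.
    apply: le_lt_trans h1 _.
    apply: (@le_lt_trans _ _ (C * \sum_(N0 <= i < n) `|x i|)).
      by rewrite ler_wpM2r // /C lerDl.
    by rewrite mulrC -ltr_pdivlMr.
  exists (lim (Fn @ \oo)); split; first exact: cv.
  apply: lt_le_trans c00 _; apply: limr_ge cv _.
  by exists i0.+1 => // n /= hn; apply: low.
move=> n x n0 [i1 hi1].
pose P k := [exists i : 'I_n, ((i : nat) == k) && (x i != 0)].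
have ex : exists k, P k by exists (nat_of_ord i1); apply/existsP; exists i1; rewrite eqxx hi1.
case: (ex_minnP ex) => i0 /existsP [j0 /andP [/eqP ej0 xj0]] hmin.
set B := \sum_(i < n) `|x i| + 1.
have B0 : 0 < B by rewrite /B ltr_pwDr // sumr_ge0.
have [c0 c00 hc] := lowerG i0 hm a1 xj0 B0.
apply: lt_le_trans c00 (hc n x j0 ej0 erefl _ _); last by rewrite /B lerDl.
move=> i hi; apply/eqP; apply: contraTT hi => hxi.
rewrite -leqNgt ej0; apply: hmin; apply/existsP; exists i; by rewrite eqxx hxi.
Qed.
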